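(* Let $p>q\geq1$ be coprime integers such that $B_{p,q}$ smoothly embeds in a smooth closed oriented $4$-manifold homotopy equivalent to $\mathbb{CP}^2$, let $a_1,\dots,a_n\geq2$ be given by the Hirzebruch–Jung continued fraction $\frac{p^2}{pq-1}=a_1-\cfrac{1}{a_2-\cfrac{1}{\cdots-\cfrac{1}{a_n}}}$, and suppose $n\geq 2$. Define $d_1=1$, $d_2=a_1d_1$, $d_s=a_{s-1}d_{s-1}-d_{s-2}$ for $s=3,\dots,n$. Then \[\sum_{i=1}^n(2-a_i)d_i=-pq.\]
   Context: For coprime integers $p>q\geq1$, $B_{p,q}$ denotes the Stein rational homology $4$-ball arising as the rational homology ball smoothing of the cyclic quotient surface singularity of type $\frac{1}{p^2}(pq-1,1)$. *)

(* Defs.v *)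
From mathcomp Require Import all_boot all_order all_algebra.
Set Implicit Arguments. Unset Strict Implicit. Unset Printing Implicit Defensive.
Import Order.TTheory GRing.Theory Num.Theory.
Local Open Scope ring_scope.

Fixpoint hjfrac (s : seq nat) : rat :=
  match s with
  | [::] => 0
  | [:: x] => x%:R
  | x :: t => x%:R - (hjfrac t)^-1
  end.

(* d_1 = 1, d_2 = a_1 d_1, d_s = a_{s-1} d_{s-1} - d_{s-2} (s >= 3),
   with a given 1-based: a i = a_i.
   hjd_pair a k = (d_{k+1}, d_{k+2}); hjd a s = d_s for s >= 1. *)
Fixpoint hjd_pair (a : nat -> int) (k : nat) : int * int :=
  match k with
  | 0 => (1, a 1%N * 1)
  | k'.+1 => let: (x, y) := hjd_pair a k' in (y, a k'.+2 * y - x)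
  end.

Definition hjd (a : nat -> int) (s : nat) : int := (hjd_pair a s.-1).1.

(* Main.v *)
Require Import Defs.
From mathcomp Require Import all_boot all_order all_algebra.
From mathcomp Require Import zify ring lra.
Import Order.TTheory GRing.Theory Num.Theory.
Local Open Scope ring_scope.

Fixpoint G (a : nat -> int) (uv : int * int) (k : nat) : int * int :=
  if k is k'.+1 then let: (x, y) := G a uv k' in (y, a k * y - x) else uv.

Fixpoint phi (s : seq nat) (u v : int) : int * int :=
  if s is x :: t then phi t v (x%:Z * v - u) else (u, v).

Lemma hjd_pairE a k : hjd_pair a k = G a (0, 1) k.+1.
Proof.
elim: k => [|k IH]; first by rewrite /= subr0.
change (G a (0,1) k.+2) with (let: (x, y) := G a (0,1) k.+1 in (y, a k.+2 * y - x)).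
by rewrite -IH.
Qed.

Lemma G_shift a uv k :
  G a uv k.+1 = G (fun j => a j.+1) (uv.2, a 1%N * uv.2 - uv.1) k.
Proof.
elim: k => [|k IH]; first by case: uv.
change (G a uv k.+2) with (let: (x, y) := G a uv k.+1 in (y, a k.+2 * y - x)).
by rewrite IH.
Qed.

Lemma G_ext a b uv k : (forall j, (0 < j)%N -> a j = b j) -> G a uv k = G b uv k.
Proof. by move=> H; elim: k => [|k IH] //=; rewrite IH H. Qed.

Lemma G_phi s u v :
  G (fun j => (nth 0%N s j.-1)%:Z) (u, v) (size s) = phi s u v.
Proof.
elim: s u v => [|x t IH] u v //.
rewrite [size _]/= G_shift /= -IH; apply: G_ext => -[|j] //.
Qed.

Lemma sumG a k :
  \sum_(1 <= i < k.+1) (2 - a i) * (G a (0, 1) i).1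
  = 1 + (G a (0, 1) k).1 - (G a (0, 1) k).2.
Proof.
elim: k => [|k IH]; first by rewrite big_geq.
rewrite big_nat_recr //= IH.
change (G a (0,1) k.+1) with (let: (x, y) := G a (0,1) k in (y, a k.+1 * y - x)).
case: (G a (0,1) k) => x y /=; ring.
Qed.

Lemma phi_lin s u v :
  phi s u v = (u * (phi s 1 0).1 + v * (phi s 0 1).1,
               u * (phi s 1 0).2 + v * (phi s 0 1).2).
Proof.
elim: s u v => [|x t IH] u v /=; first by congr pair; ring.
rewrite (IH v); set w := (x%:Z * 0 - 1); set z := (x%:Z * 1 - 0).
rewrite (IH 0 w) (IH 1 z) /w /z.
case: (phi t 1 0) => A1 A2; case: (phi t 0 1) => B1 B2 /=.
congr pair; ring.
Qed.

Lemma phi_det s u1 v1 u2 v2 :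
  (phi s u1 v1).2 * (phi s u2 v2).1 - (phi s u1 v1).1 * (phi s u2 v2).2
  = v1 * u2 - u1 * v2.
Proof. elim: s u1 v1 u2 v2 => [|x t IH] u1 v1 u2 v2 /=; rewrite ?IH; ring. Qed.

Lemma phi_bound s u v : all (fun x => 2 <= x)%N s -> 0 < u < v ->
  0 < (phi s u v).1 < (phi s u v).2.
Proof.
elim: s u v => [|x t IH] u v //= /andP[hx ht] /andP[hu hv].
apply: IH => //; apply/andP; split; first lia.
have : (2 <= x%:Z) by lia.
nia.
Qed.

Lemma hjfrac_phi s : s != [::] -> all (fun x => 2 <= x)%N s ->
  hjfrac s = ((phi s 0 1).2)%:~R / (- (phi s 1 0).2)%:~R.
Proof.
elim: s => [|x t IH] // _ /= /andP[hx ht].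
case: t IH ht => [|y t'] IH ht.
  by rewrite /= mulr1 subr0 mulr0 sub0r opprK divr1.
idtac.
rewrite IH //.
set t := y :: t'.
have hP : 0 < (phi t 0 1).2.
  rewrite /t /=; move: ht => /= /andP[hy ht'].
  have /andP[h1 h] := @phi_bound t' 1 (y%:Z * 1 - 0) ht' ltac:(apply/andP; split; lia).
  by apply: lt_trans h.
rewrite mulr0 sub0r mulr1 subr0.
rewrite (phi_lin t 1 x) (phi_lin t 0 (-1)) /=.
rewrite invf_div.
have hP' : ((phi t 0 1).2)%:~R != 0 :> rat by rewrite intr_eq0 gt_eqF.
move: hP'; set P := (phi t 0 1).2; set Q := (phi t 1 0).2 => hP'.
rewrite !rmorphD !rmorphN !rmorphM /= !mul1r !mul0r !add0r.
rewrite mulN1r rmorphN opprK -pmulrn.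
by field.
Qed.

Theorem lemma3p3 (p q : nat) (a : seq nat) :
  (1 <= q < p)%N -> coprime p q ->
  all (fun x => 2 <= x)%N a ->
  (2 <= size a)%N ->
  hjfrac a = ((p ^ 2)%:R / (p * q - 1)%:R : rat) ->
  \sum_(1 <= i < (size a).+1)
      (2 - (nth 0%N a i.-1)%:Z) * hjd (fun j => (nth 0%N a j.-1)%:Z) i
    = - (p * q)%:Z.
Proof.
move=> /andP[q1 qp] _ Hall Hsz Hfr.
set f := fun j => (nth 0%N a j.-1)%:Z.
rewrite (eq_big_nat _ _ (F2 := fun i => (2 - f i) * (G f (0,1) i).1)); last first.
  by move=> i /andP[i1 _]; rewrite /hjd hjd_pairE prednK.
rewrite sumG /f G_phi.
have Hne : a != [::] by case: a Hsz {Hfr Hall f}.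
have := hjfrac_phi a Hne Hall; rewrite Hfr.
have := phi_det a 0 1 1 0.
have : 0 < (phi a 0 1).1 < (phi a 0 1).2.
  case: a Hsz Hne Hall {Hfr f} => [|x t] // _ _ /= /andP[hx ht].
  apply: phi_bound => //; apply/andP; split; lia.
case: (phi a 0 1) => D P; case: (phi a 1 0) => X Q' /= /andP[D0 DP] Hdet.
set Q := - Q'.
have {Hdet} Hdet : P * X + D * Q = 1 by rewrite /Q; lia.
move=> Hr.
have p0 : (0 < p)%N by lia.
have pq1 : (1 <= p * q)%N by rewrite muln_gt0 p0; lia.
have HE : P * (p * q - 1)%:Z = (p ^ 2)%:Z * Q.
  apply: (@intr_inj rat).
  have hQ : Q%:~R != 0 :> rat.
    apply/negP => /eqP hQ; move: Hr; rewrite -/Q hQ invr0 mulr0 => /esym/eqP.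
    rewrite eq_sym mulf_eq0 invr_eq0 !pnatr_eq0 expn_eq0; nia.
  have hd : (p * q - 1)%:R != 0 :> rat by rewrite pnatr_eq0; nia.
  rewrite !rmorphM /= -!pmulrn.
  move/(congr1 (fun z => z * Q%:~R * (p * q - 1)%:R)): Hr.
  rewrite -/Q divfK // mulrAC divfK //.
  by move=> <-; rewrite natrX expr2.
have Eq2 : P * (p%:Z * q%:Z - 1) = p%:Z ^+ 2 * Q.
  by move: HE; rewrite -subzn // PoszM -natrX.
move: Eq2 => {HE} HE.
have q1' : 1 <= q%:Z by lia.
have qp' : q%:Z < p%:Z by lia.
rewrite PoszM.
move: Hdet HE D0 DP q1' qp'; clear.
move: (p%:Z) (q%:Z) => {}p {}q Hdet HE D0 DP q1 qp.
clearbody Q.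
set k := P * q ^+ 2 - Q * (p * q + 1).
have E : p ^+ 2 * Q - P * (p * q - 1) = 0 by rewrite HE subrr.
have E1 : 1 - (P * X + D * Q) = 0 by rewrite Hdet subrr.
have Pk : P = p ^+ 2 * k.
  apply/eqP; rewrite -subr_eq0; apply/eqP.
  transitivity ((p * q + 1) * (p ^+ 2 * Q - P * (p * q - 1))).
    rewrite /k; ring.
  by rewrite E mulr0.
set m := p ^+ 2 * X + D * (p * q - 1).
have pm : p ^+ 2 = P * m.
  apply/eqP; rewrite -subr_eq0; apply/eqP.
  transitivity (p ^+ 2 * (1 - (P * X + D * Q)) + D * (p ^+ 2 * Q - P * (p * q - 1))).
    rewrite /m; ring.
  by rewrite E E1 mulr0 mulr0 addr0.
have p2 : 0 < p ^+ 2 by rewrite exprn_gt0 //; lia.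
have km : k * m = 1.
  apply: (mulfI (lt0r_neq0 p2)); by rewrite mulr1 mulrA -Pk -pm.
have k0 : 0 < k.
  have P0 : 0 < P by apply: lt_trans D0 DP.
  by move: P0; rewrite Pk pmulr_rgt0.
have m0 : 0 < m.
  have : 0 < k * m by rewrite km.
  by rewrite pmulr_rgt0.
have k1 : k = 1.
  have : 0 <= (k - 1) * (m - 1) by apply: mulr_ge0; lia.
  move: km; rewrite mulrBr !mulrBl !mul1r !mulr1; lia.
rewrite k1 mulr1 in Pk.
have Q1 : Q = p * q - 1.
  apply: (mulfI (lt0r_neq0 p2)); apply/eqP; rewrite -subr_eq0; apply/eqP.
  rewrite -E Pk; ring.
set t := X * (p * q + 1) + D * q ^+ 2.
have Dt : D = p ^+ 2 * t - p * q - 1.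
  apply/eqP; rewrite -subr_eq0; apply/eqP.
  transitivity ((p * q + 1) * (1 - (P * X + D * Q))).
    rewrite /t Pk Q1; ring.
  by rewrite E1 mulr0.
have pq0 : 0 <= p * q by apply: mulr_ge0; lia.
have pq2 : p * q + 1 <= p ^+ 2.
  have : 0 <= p * (p - 1 - q) by apply: mulr_ge0; lia.
  rewrite expr2 !mulrBr mulr1; lia.
have t1 : 0 < t.
  have : 0 < p ^+ 2 * t by lia.
  by rewrite pmulr_rgt0.
have t2 : t < 2.
  have : 0 < p ^+ 2 * (2 - t) by rewrite mulrBr; lia.
  rewrite pmulr_rgt0 //; lia.
have t3 : t = 1 by lia.
rewrite Dt Pk t3; ring.
Qed.
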